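(* Let $i,j,k$ be distinct jobs such that $(i,j)$ and $(i,k)$ are red pairs and $t_j\le t_k$. Then $D^*(j,k)\ge(\nu+\nu^2)t_k$ and, in the schedule produced by $1$-SORT, $D(j,k)\le\left(1+\frac{1}{\nu+\nu^2}\right)D^*(j,k)$.
   Context: Setting: single machine, jobs $J=\{1,\dots,n\}$, each job $j$ with test time $t_j\ge0$ and processing time $p_j\ge0$ (revealed only when the test is executed); each job's test must be executed before its processing part, which may start any time after the test; operations are non-preemptive and the machine does one at a time. $\sigma_j=t_j+p_j$, $m_j=\max\{t_j,p_j\}$. Standing assumption (general position): no two of the $3n$ numbers $t_j,p_j,\sigma_j$ are equal. Algorithm $1$-SORT: keep a priority queue of available operations, initially the test of every job $j$ with priority $t_j$; repeatedly remove a minimum-priority operation and execute it immediately; after executing the test of $j$, insert the processing part of $j$ with priority $p_j$. For distinct jobs $j,k$, let $d_{k,j}$ be the total amount of time during which operations of $k$ are executed before the completion time of $j$, and $D(j,k)=d_{j,k}+d_{k,j}$, evaluated for the $1$-SORT schedule; $D^*(j,k)=\min\{\sigma_j,\sigma_k\}$. Fix constants $\mu>1$ and $0<\nu<1$ with $\mu\nu>1$ and $1+\frac1\mu\le\nu+\nu^2$. A job $j$ is imbalanced if $m_j\ge\mu\min\{t_j,p_j\}$. For distinct jobs $j,k$, the ordered pair $(j,k)$ is a red pair if $j$ is imbalanced, $m_j\ge t_k\ge\nu m_j$, and $p_k\ge\nu t_k$. *)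

(* Defs.v *)
From mathcomp Require Import all_boot all_order all_algebra.
Set Implicit Arguments. Unset Strict Implicit. Unset Printing Implicit Defensive.
Import Order.TTheory GRing.Theory Num.Theory.
Local Open Scope ring_scope.

Section Testing.
Variables (R : realFieldType) (n : nat) (t p : 'I_n -> R).

(* An operation: (j, false) = test of job j, (j, true) = processing part of j. *)
Definition op := ('I_n * bool)%type.

(* length of an operation = its 1-SORT priority *)
Definition oplen (o : op) : R := if o.2 then p o.1 else t o.1.

Definition sigma (j : 'I_n) : R := t j + p j.
Definition mjob (j : 'I_n) : R := Num.max (t j) (p j).

(* minimum-priority operation of the queue x0 :: s (first one in case of ties,
   which never occur under general position) *)
Definition pick_min (x0 : op) (s : seq op) : op :=
  foldl (fun a b => if oplen b < oplen a then b else a) x0 s.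

Fixpoint sort1_run (fuel : nat) (queue : seq op) : seq op :=
  match fuel with
  | 0 => [::]
  | f.+1 =>
    match queue with
    | [::] => [::]
    | o :: q' =>
      let m := pick_min o q' in
      m :: sort1_run f (rem m queue ++ (if m.2 then [::] else [:: (m.1, true)]))
    end
  end.

(* The sequence of operations, in execution order, of the 1-SORT schedule
   (executed back to back without idle time). *)
Definition sort1_schedule : seq op :=
  sort1_run (2 * n) [seq (j, false) | j <- enum 'I_n].

(* d k j: total time during which operations of k are executed before the
   completion time of j (= completion of the processing part of j). *)
Definition dtime (k j : 'I_n) : R :=
  let s := sort1_schedule in
  \sum_(o <- take (index (j, true) s).+1 s | o.1 == k) oplen o.

Definition Dpair (j k : 'I_n) : R := dtime j k + dtime k j.
Definition Dstar (j k : 'I_n) : R := Num.min (sigma j) (sigma k).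

(* general position: the 3n numbers t_j, p_j, sigma_j are pairwise distinct *)
Definition val3 (j : 'I_n) (c : 'I_3) : R :=
  if val c == 0%N then t j else if val c == 1%N then p j else sigma j.
Definition general_position : Prop :=
  forall (a b : 'I_n) (x y : 'I_3), (a, x) != (b, y) -> val3 a x != val3 b y.

Definition imbalanced (mu : R) (j : 'I_n) : Prop :=
  mjob j >= mu * Num.min (t j) (p j).

Definition red_pair (mu nu : R) (j k : 'I_n) : Prop :=
  [/\ j != k, imbalanced mu j, mjob j >= t k, t k >= nu * mjob j
    & p k >= nu * t k].

End Testing.

(* Main.v *)
Require Import Defs.
From mathcomp Require Import all_boot all_order all_algebra.
From mathcomp Require Import lra zify.
Set Implicit Arguments. Unset Strict Implicit. Unset Printing Implicit Defensive.
Import Order.TTheory GRing.Theory Num.Theory.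
Local Open Scope ring_scope.

Section Sim.
Variables (R : realFieldType) (n : nat) (t p : 'I_n -> R).
Local Notation len := (oplen t p).
Local Notation run := (sort1_run t p).

Lemma pick_min_in x0 s : pick_min t p x0 s \in x0 :: s.
Proof.
elim: s x0 => [|y s IH] x0 /=; first by rewrite inE.
move: (IH (if len y < len x0 then y else x0)); rewrite /pick_min /=.
case: ifP => _; rewrite !inE => /orP[/eqP->|->]; rewrite ?eqxx ?orbT //.
Qed.

Lemma pick_min_le x0 s o : o \in x0 :: s -> len (pick_min t p x0 s) <= len o.
Proof.
elim: s x0 o => [|y s IH] x0 o /=; first by rewrite inE => /eqP->.
rewrite /pick_min /=.
set x1 := (if len y < len x0 then y else x0).
have H1 : len (pick_min t p x1 s) <= len x1 by apply: IH; rewrite inE eqxx.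
rewrite !inE => /or3P[/eqP->|/eqP->|Ho].
- apply: le_trans H1 _; rewrite /x1; case: ifP => // /ltW //.
- apply: le_trans H1 _; rewrite /x1; case: ifP => // /negbT; rewrite -leNgt //.
- by apply: IH; rewrite inE Ho orbT.
Qed.

Definition nextq (q : seq (op n)) (m : op n) :=
  rem m q ++ (if m.2 then [::] else [:: (m.1, true)]).

Lemma run_cons f o q0 : run f.+1 (o :: q0) =
  pick_min t p o q0 :: run f (nextq (o :: q0) (pick_min t p o q0)).
Proof. by []. Qed.

Definition Inv (q : seq (op n)) :=
  uniq q /\ forall x, (x, false) \in q -> (x, true) \notin q.

Definition desc (q : seq (op n)) (o : op n) :=
  (o \in q) || (o.2 && ((o.1, false) \in q)).

Definition w (o : op n) := if o.2 then 1%N else 2%N.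
Definition mu (q : seq (op n)) := (\sum_(o <- q) w o)%N.

Lemma mem_next1 q m o : uniq q -> o \in q -> o != m -> o \in nextq q m.
Proof. by move=> Hu Ho Hne; rewrite mem_cat (mem_rem_uniq _ Hu) inE Ho Hne. Qed.

Lemma mem_next2 q m : m.2 = false -> (m.1, true) \in nextq q m.
Proof. by move=> H; rewrite /nextq H mem_cat inE eqxx orbT. Qed.

Lemma mem_next3 q m o : o \in nextq q m ->
  o \in q \/ (m.2 = false /\ o = (m.1, true)).
Proof.
rewrite mem_cat => /orP[/mem_rem|]; first by left.
case: (m.2) => //; rewrite inE => /eqP; by right.
Qed.

Lemma Inv_next q m : Inv q -> m \in q -> Inv (nextq q m).
Proof.
case=> Hu Hi Hm; split.
- rewrite /nextq; case E: (m.2); first by rewrite cats0 rem_uniq.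
  rewrite cat_uniq rem_uniq //= andbT orbF.
  have Hm' : (m.1, false) \in q by case: m Hm E => x b Hm0 /= E; rewrite E in Hm0.
  by apply/negP => /mem_rem H; move: (Hi _ Hm'); rewrite H.
- move=> y Hyn; have [Hy|[_ Hy]] := mem_next3 Hyn; last by [].
  apply/negP => /mem_next3 [Hy'|[E Hy']].
  + by move: (Hi y Hy); rewrite Hy'.
  + case: m Hm E Hy' Hyn => x b /= Hm E [Exy] Hyn; subst b y.
    by move: Hyn; rewrite /nextq /= mem_cat (mem_rem_uniq _ Hu) inE eqxx /= inE xpair_eqE andbF.
Qed.

Lemma mu_next q m : m \in q -> (mu (nextq q m)).+1 = mu q.
Proof.
move=> Hm; rewrite /mu (perm_big _ (perm_to_rem Hm)) big_cons /nextq big_cat /=.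
set Sm := (\sum_(_ <- rem m q) w _)%N.
have -> : w m = if m.2 then 1%N else 2%N by [].
case: (m.2); rewrite ?big_nil ?big_cons ?big_nil /= -/Sm; clearbody Sm; rewrite /w /= ?addn0; lia.
Qed.


Lemma desc_next q m b : uniq q -> m \in q -> desc q b -> b != m -> desc (nextq q m) b.
Proof.
rewrite /desc => Hu Hm /orP[Hb|/andP[Hb2 Hbf]] Hne.
- by rewrite mem_next1.
- case E: (m == (b.1, false)).
  + move/eqP: E => E; subst m.
    case: b Hb2 {Hbf Hne Hm} => x [] //= _.
    by apply/orP; left; exact: (@mem_next2 q (x, false) erefl).
  + apply/orP; right; rewrite Hb2 /=; apply: mem_next1 => //; by rewrite eq_sym E.
Qed.

Lemma desc_back q m o : m \in q -> desc (nextq q m) o -> desc q o.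
Proof.
rewrite /desc => Hm /orP[/mem_next3 [H|[E H]]|/andP[Ho2 /mem_next3 [H|[E H]]]].
- by rewrite H.
- subst o; apply/orP; right => /=.
  by case: m Hm E => x b Hm /= E; rewrite E in Hm.
- by rewrite Ho2 H orbT.
- by case: H.
Qed.

Lemma not_desc_next q m : Inv q -> m \in q -> ~~ desc (nextq q m) m.
Proof.
case=> Hu Hi Hm; rewrite /desc negb_or; apply/andP; split.
- rewrite /nextq mem_cat (mem_rem_uniq _ Hu) inE eqxx /=.
  case E: (m.2); rewrite ?in_nil // inE.
  by case: m {Hm} E => x b /= ->; rewrite xpair_eqE andbF.
- apply/negP => /andP[Hm2 /mem_next3 [H|[E H]]].
  + case: m Hm Hm2 H => x b Hm /= Eb H; rewrite Eb in Hm.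
    by move: (Hi x H); rewrite Hm.
  + by rewrite E in Hm2.
Qed.

Lemma mu_pos o0 q0 : (0 < mu (o0 :: q0))%N.
Proof. by rewrite /mu big_cons /w; case: (o0.2). Qed.

Lemma index_cons' (b m : op n) s :
  index b (m :: s) = if m == b then 0%N else (index b s).+1.
Proof. by []. Qed.

Lemma run_mem f q o : Inv q -> (mu q <= f)%N -> desc q o -> o \in run f q.
Proof.
elim: f q => [|f IH] [|o0 q0] Hi Hmu Hd.
- by move: Hd; rewrite /desc !in_nil andbF.
- by have := mu_pos o0 q0; lia.
- by move: Hd; rewrite /desc !in_nil andbF.
rewrite run_cons; set m := pick_min t p o0 q0.
have Hm : m \in o0 :: q0 := pick_min_in _ _.
rewrite inE; case E: (o == m) => //=.
apply: IH.
- exact: Inv_next.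
- by have := mu_next Hm; lia.
- by apply: desc_next => //; [case: Hi | rewrite E].
Qed.

Lemma run_desc f q o : o \in run f q -> desc q o.
Proof.
elim: f q => [|f IH] [|o0 q0] //.
rewrite run_cons inE => /orP[/eqP->|H].
- by rewrite /desc pick_min_in.
- exact: (desc_back (pick_min_in _ _) (IH _ H)).
Qed.

Lemma run_uniq f q : Inv q -> uniq (run f q).
Proof.
elim: f q => [|f IH] [|o0 q0] Hi //.
rewrite run_cons /=; apply/andP; split.
- apply/negP => /run_desc; apply/negP; apply: not_desc_next => //.
  exact: pick_min_in.
- apply: IH; apply: Inv_next => //; exact: pick_min_in.
Qed.


Lemma inv_true q x : Inv q -> (x, false) \in q -> (x, true) \notin q.
Proof. by case=> _ H; apply: H. Qed.

Lemma neq_of_notin (q : seq (op n)) a b : a \in q -> b \notin q -> a != b.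
Proof. by move=> Ha Hb; apply/eqP => E; move: Hb; rewrite -E Ha. Qed.

Ltac base_tac :=
  match goal with
  | Hmu : is_true (mu (?o0 :: ?q0) <= 0)%N |- _ => by have := mu_pos o0 q0; lia
  | H : is_true (_ \in [::]) |- _ => by rewrite in_nil in H
  end.

Lemma run_G f q a b : Inv q -> (mu q <= f)%N -> a \in q -> desc q b ->
  len a < len b -> (index a (run f q) < index b (run f q))%N.
Proof.
elim: f q => [|f IH] [|o0 q0] Hi Hmu Ha Hb Hl; try base_tac.
rewrite run_cons !index_cons'; set m := pick_min t p o0 q0.
have Hm : m \in o0 :: q0 := pick_min_in _ _.
have Hmin : forall o, o \in o0 :: q0 -> len m <= len o := fun o => @pick_min_le o0 q0 o.
have Nmb : m != b.
  by apply/eqP => E; have := Hmin a Ha; rewrite E leNgt Hl.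
rewrite (negbTE Nmb).
case: (eqVneq m a) => [//|Nma].
rewrite ltnS; apply: IH.
- exact: Inv_next.
- by have := mu_next Hm; lia.
- by apply: mem_next1; [case: Hi| |rewrite eq_sym].
- by apply: desc_next; [case: Hi| | |rewrite eq_sym].
- exact: Hl.
Qed.

Lemma run_order f q x : Inv q -> (mu q <= f)%N -> (x, false) \in q ->
  (index (x, false) (run f q) < index (x, true) (run f q))%N.
Proof.
elim: f q => [|f IH] [|o0 q0] Hi Hmu Ha; try base_tac.
rewrite run_cons !index_cons'; set m := pick_min t p o0 q0.
have Hm : m \in o0 :: q0 := pick_min_in _ _.
have Nmt : m != (x, true) := neq_of_notin Hm (inv_true Hi Ha).
rewrite (negbTE Nmt).
case: (eqVneq m (x, false)) => [//|Nma].
rewrite ltnS; apply: IH.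
- exact: Inv_next.
- by have := mu_next Hm; lia.
- by apply: mem_next1; [case: Hi| |rewrite eq_sym].
Qed.

Lemma run_H f q x b : Inv q -> (mu q <= f)%N -> (x, false) \in q -> b \in q ->
  t x < len b -> p x < len b ->
  (index (x, true) (run f q) < index b (run f q))%N.
Proof.
elim: f q => [|f IH] [|o0 q0] Hi Hmu Ha Hb Hl1 Hl2; try base_tac.
rewrite run_cons !index_cons'; set m := pick_min t p o0 q0.
have Hm : m \in o0 :: q0 := pick_min_in _ _.
have Hmin : forall o, o \in o0 :: q0 -> len m <= len o := fun o => @pick_min_le o0 q0 o.
have Nmb : m != b.
  by apply/eqP => E; have := Hmin _ Ha; rewrite E /= leNgt Hl1.
have Nmt : m != (x, true) := neq_of_notin Hm (inv_true Hi Ha).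
rewrite (negbTE Nmb) (negbTE Nmt) ltnS.
have Hu : uniq (o0 :: q0) by case: Hi.
have HI := Inv_next Hi Hm.
have Hmu' : (mu (nextq (o0 :: q0) m) <= f)%N by have := mu_next Hm; lia.
have Hb' : b \in nextq (o0 :: q0) m by apply: mem_next1; rewrite // eq_sym.
case: (eqVneq m (x, false)) => [Em|Nma].
- apply: run_G => //.
  + by have := @mem_next2 (o0 :: q0) m; rewrite Em /=; apply.
  + by rewrite /desc Hb'.
- apply: IH => //.
  by apply: mem_next1; rewrite // eq_sym.
Qed.

Lemma run_G2 f q x y : Inv q -> (mu q <= f)%N -> (x, false) \in q -> (y, false) \in q ->
  x != y -> p x < p y -> t x < p y ->
  (index (x, true) (run f q) < index (y, true) (run f q))%N.
Proof.
elim: f q => [|f IH] [|o0 q0] Hi Hmu Hx Hy Nxy Hl1 Hl2; try base_tac.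
rewrite run_cons !index_cons'; set m := pick_min t p o0 q0.
have Hm : m \in o0 :: q0 := pick_min_in _ _.
have Nmx : m != (x, true) := neq_of_notin Hm (inv_true Hi Hx).
have Nmy : m != (y, true) := neq_of_notin Hm (inv_true Hi Hy).
rewrite (negbTE Nmx) (negbTE Nmy) ltnS.
have Hu : uniq (o0 :: q0) by case: Hi.
have HI := Inv_next Hi Hm.
have Hmu' : (mu (nextq (o0 :: q0) m) <= f)%N by have := mu_next Hm; lia.
case: (eqVneq m (x, false)) => [Em|Nmxf].
- apply: run_G => //.
  + by have := @mem_next2 (o0 :: q0) m; rewrite Em /=; apply.
  + rewrite /desc /=; apply/orP; right; apply: mem_next1 => //.
    by rewrite Em eq_sym xpair_eqE negb_and Nxy.
case: (eqVneq m (y, false)) => [Em|Nmyf].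
- apply: run_H => //.
  + by apply: mem_next1; rewrite // Em xpair_eqE negb_and Nxy.
  + by have := @mem_next2 (o0 :: q0) m; rewrite Em /=; apply.
- apply: IH => //.
  + by apply: mem_next1; rewrite // eq_sym.
  + by apply: mem_next1; rewrite // eq_sym.
Qed.


Lemma sum_job (r : seq (op n)) x : uniq r ->
  \sum_(o <- r | o.1 == x) len o =
  (if (x, false) \in r then t x else 0) + (if (x, true) \in r then p x else 0).
Proof.
elim: r => [|[y b] r IH] /=; first by rewrite big_nil addr0.
case/andP => Hn Hu; rewrite big_cons /= IH // !inE !xpair_eqE.
case: (eqVneq y x) => [Eyx|Nyx] /=.
- subst y; rewrite /oplen /=; case: b Hn => Hn /=; rewrite (negbTE Hn);
  case: ((x, _) \in r); rewrite /= ?addr0 ?add0r; lra.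
- by [].
Qed.

Definition q0 : seq (op n) := [seq (j, false) | j <- enum 'I_n].

Lemma Inv_q0 : Inv q0.
Proof.
split.
- by rewrite map_inj_uniq ?enum_uniq // => a b [].
- by move=> x _; apply/negP => /mapP [y _] [].
Qed.

Lemma mu_map (l : seq 'I_n) : mu [seq (j, false) | j <- l] = (2 * size l)%N.
Proof. elim: l => [|a l IH]; first by rewrite /mu big_nil. rewrite /= /mu big_cons -/(mu _) IH /w /=; lia. Qed.

Lemma mu_q0 : (mu q0 <= 2 * n)%N.
Proof. by rewrite /q0 mu_map size_enum_ord. Qed.

Lemma in_q0 x : (x, false) \in q0.
Proof. by rewrite /q0 map_f ?mem_enum. Qed.

Local Notation s := (sort1_schedule t p).

Lemma s_eq : s = run (2 * n) q0.
Proof. by []. Qed.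

Lemma s_uniq : uniq s.
Proof. rewrite s_eq; apply: run_uniq; exact: Inv_q0. Qed.

Lemma s_mem x b : (x, b) \in s.
Proof.
rewrite s_eq; apply: run_mem; [exact: Inv_q0|exact: mu_q0|].
by rewrite /desc /=; case: b; rewrite in_q0 ?orbT.
Qed.

Lemma dtime_eq x y : dtime t p x y =
  (if (index (x, false) s <= index (y, true) s)%N then t x else 0) +
  (if (index (x, true) s <= index (y, true) s)%N then p x else 0).
Proof.
rewrite /dtime sum_job; last by rewrite take_uniq // s_uniq.
by rewrite !in_take ?s_mem // !ltnS.
Qed.


Lemma D_bound j k : general_position t p -> j != k -> t j <= t k ->
  (forall x, 0 <= p x) -> Dpair t p j k - t k <= Dstar t p j k.
Proof.
move=> hgp hjk htjk hp.
have Hne : forall (c d : 'I_3), (j, c) != (k, d).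
  by move=> c d; rewrite xpair_eqE (negbTE hjk).
have tjk : t j != t k := hgp j k ord0 ord0 (Hne _ _).
have ptjk : p j != t k := hgp j k (@Ordinal 3 1 isT) ord0 (Hne _ _).
have ppjk : p j != p k := hgp j k (@Ordinal 3 1 isT) (@Ordinal 3 1 isT) (Hne _ _).
have ltjk : t j < t k by rewrite lt_neqAle tjk htjk.
have HI := Inv_q0; have Hmu := mu_q0.
have Fjk : (index (j, false) s < index (k, false) s)%N.
  by rewrite s_eq; apply: run_G => //; [exact: in_q0 | by rewrite /desc in_q0].
have Oj : (index (j, false) s < index (j, true) s)%N.
  by rewrite s_eq; apply: run_order => //; exact: in_q0.
have Ok : (index (k, false) s < index (k, true) s)%N.
  by rewrite s_eq; apply: run_order => //; exact: in_q0.
have hpj := hp j; have hpk := hp k.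
rewrite /Dpair /Dstar !dtime_eq le_min /sigma.
set Fj := index (j, false) s in Fjk Oj *.
set Fk := index (k, false) s in Fjk Ok *.
set Tj := index (j, true) s in Oj *.
set Tk := index (k, true) s in Ok *.
have T1 : (Fj <= Tk)%N by lia.
rewrite T1.
case: (ltgtP (p j) (t k)) => [H1|H1|H1]; last by rewrite H1 eqxx in ptjk.
- have Tjk : (Tj < Fk)%N.
    by rewrite /Tj /Fk s_eq; apply: run_H => //; exact: in_q0.
  have T2 : (Tj <= Tk)%N by lia.
  have T3 : (Fk <= Tj)%N = false by apply/negbTE; rewrite -ltnNge.
  have T4 : (Tk <= Tj)%N = false by apply/negbTE; rewrite -ltnNge; lia.
  rewrite T2 T3 T4; apply/andP; split; lra.
- have Fkj : (Fk < Tj)%N.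
    by rewrite /Tj /Fk s_eq; apply: run_G => //; [exact: in_q0 | by rewrite /desc /= in_q0 orbT].
  have T3 : (Fk <= Tj)%N by lia.
  rewrite T3.
  case: (ltgtP (p j) (p k)) => [H2|H2|H2]; last by rewrite H2 eqxx in ppjk.
  + have Tjk : (Tj < Tk)%N.
      by rewrite /Tj /Tk s_eq; apply: run_G2 => //; try exact: in_q0; lra.
    have T2 : (Tj <= Tk)%N by lia.
    have T4 : (Tk <= Tj)%N = false by apply/negbTE; rewrite -ltnNge.
    rewrite T2 T4; apply/andP; split; lra.
  + have Tkj : (Tk < Tj)%N.
      rewrite /Tj /Tk s_eq; apply: run_G2 => //; try exact: in_q0; try lra.
      by rewrite eq_sym.
    have T2 : (Tj <= Tk)%N = false by apply/negbTE; rewrite -ltnNge.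
    have T4 : (Tk <= Tj)%N by lia.
    rewrite T2 T4; apply/andP; split; lra.
Qed.

End Sim.

Theorem mainTheorem9 (R : realFieldType) (n : nat) (t p : 'I_n -> R)
  (mu nu : R)
  (ht : forall j, 0 <= t j) (hp : forall j, 0 <= p j)
  (hgp : general_position t p)
  (hmu : 1 < mu) (hnu0 : 0 < nu) (hnu1 : nu < 1) (hmunu : 1 < mu * nu)
  (hmunu2 : 1 + mu^-1 <= nu + nu ^+ 2)
  (i j k : 'I_n)
  (hij : i != j) (hik : i != k) (hjk : j != k)
  (rij : red_pair t p mu nu i j) (rik : red_pair t p mu nu i k)
  (htjk : t j <= t k) :
  (nu + nu ^+ 2) * t k <= Dstar t p j k /\
  Dpair t p j k <= (1 + (nu + nu ^+ 2)^-1) * Dstar t p j k.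
Proof.
case: rij => _ _ Hmj Htj Hpj; case: rik => _ _ Hmk Htk Hpk.
have Hc : 0 < nu + nu ^+ 2 by rewrite expr2; nra.
have htj := ht j; have htk := ht k.
have P1 : (nu + nu ^+ 2) * t k <= Dstar t p j k.
  rewrite /Dstar le_min /sigma; apply/andP; split.
  - have a1 : (1 + nu) * t j <= t j + p j by nra.
    have a2 : (1 + nu) * (nu * mjob t p i) <= (1 + nu) * t j.
      by rewrite ler_wpM2l //; lra.
    have a3 : (1 + nu) * (nu * t k) <= (1 + nu) * (nu * mjob t p i).
      by rewrite ler_wpM2l ?ler_wpM2l //; lra.
    rewrite expr2; nra.
  - rewrite expr2; nra.
split => //.
have HD := D_bound hgp hjk htjk hp.
have H3 : t k <= Dstar t p j k / (nu + nu ^+ 2) by rewrite ler_pdivlMr // mulrC.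
rewrite mulrDl mul1r (mulrC _^-1); lra.
Qed.
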